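(* Let $\alpha_N,\alpha_B$ be distinct nonzero real numbers with $\alpha_B=-\alpha_N$, and let $0<t_0\le1$ be fixed. Put $T=3+t_0^2$ and, for $\theta\in[-\pi,\pi]^2$, $F=1+e^{i\theta_1}+e^{i\theta_2}$. Consider $$M(\eta,\theta)=\begin{pmatrix}-T\eta-\alpha_N&\bar F&0&t_0^2\\ F&-T\eta-\alpha_B&t_0^2&0\\ 0&t_0^2&-T\eta&\bar F\\ t_0^2&0&F&-T\eta\end{pmatrix}.$$ Then the dispersion relation obtained from the hBN–graphene bilayer stacking (the root branches $\eta$ of $\det M(\eta,\theta)=0$) always has a gap at $F=0$, i.e. no two branches touch at $F=0$.
   Context: This models a two-layer heterostructure as a periodic Schrödinger quantum graph (edges of length 1, even continuous potential $q_0$): a lower hexagonal layer with two alternating atom types (parameters $\delta_N$ at type-$A$ and $\delta_B$ at type-$B$ vertices, modelling hexagonal boron nitride) and an upper hexagonal layer with one atom type (parameter $\delta_C$, modelling graphene), joined by vertical edges with weak coupling $t_0$ and modified Neumann vertex conditions $u_{a_1}(v)=u_{a_2}(v)=u_f(v)/t_0$, $\sum_a u_a'(v)\pm\sum_f t_0u_f'(v)=\delta_vu(v)$. For $\lambda$ outside the Dirichlet spectrum, with $\varphi_0,\varphi_1$ solutions of $-\varphi''+q_0\varphi=\lambda\varphi$ with $\varphi_0(0)=1,\varphi_0(1)=0,\varphi_1(0)=0,\varphi_1(1)=1$, set $\eta=\varphi_1'(1)/\varphi_1'(0)$, $\alpha_k=\delta_k/\varphi_1'(0)$ (treated as constants),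 and the carbon parameter is taken $\alpha_C=0$. $\lambda$ lies in the spectrum iff $\det M(\eta(\lambda),\theta)=0$ for some $\theta$; the dispersion relation is identified with the root branches $\eta$ as functions of $F$. *)

(* Defs.v *)
From HB Require Import structures.
From mathcomp Require Import all_boot all_order all_algebra.
From mathcomp Require Import all_classical all_reals all_analysis.
From mathcomp Require Import complex.
Set Implicit Arguments. Unset Strict Implicit. Unset Printing Implicit Defensive.
Import Order.TTheory GRing.Theory Num.Theory.
Local Open Scope ring_scope.
Local Open Scope complex_scope.

Section Bilayer.
Variable R : realType.

Definition Fq (th1 th2 : R) : R[i] :=
  1 + (cos th1 +i* sin th1) + (cos th2 +i* sin th2).

Definition Mpoly (aN aB t0 th1 th2 : R) : 'M[{poly R[i]}]_4 :=
  let T : R[i] := (3 + t0 ^+ 2)%:C in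
  let F := Fq th1 th2 in
  let t2 : R[i] := (t0 ^+ 2)%:C in
  \matrix_(i < 4, j < 4)
    match nat_of_ord i, nat_of_ord j with
    | 0, 0 => - (T%:P * 'X) - (aN%:C)%:P
    | 0, 1 => (F^*)%:P
    | 0, 3 => t2%:P
    | 1, 0 => F%:P
    | 1, 1 => - (T%:P * 'X) - (aB%:C)%:P
    | 1, 2 => t2%:P
    | 2, 1 => t2%:P
    | 2, 2 => - (T%:P * 'X)
    | 2, 3 => (F^*)%:P
    | 3, 0 => t2%:P
    | 3, 2 => F%:P
    | 3, 3 => - (T%:P * 'X)
    | _, _ => 0
    end.

Definition Mmat (aN aB t0 th1 th2 : R) (eta : R[i]) : 'M[R[i]]_4 :=
  map_mx (fun p : {poly R[i]} => p.[eta]) (Mpoly aN aB t0 th1 th2).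

Definition dispersion_poly (aN aB t0 th1 th2 : R) : {poly R[i]} :=
  \det (Mpoly aN aB t0 th1 th2).

End Bilayer.

(* Main.v *)
Require Import Defs.
From HB Require Import structures.
From mathcomp Require Import all_boot all_order all_algebra.
From mathcomp Require Import all_classical all_reals all_analysis.
From mathcomp Require Import complex ring lra.
Import Order.TTheory GRing.Theory Num.Theory.
Local Open Scope ring_scope.
Local Open Scope complex_scope.
Lemma det4 (R : comPzRingType) (f : nat -> nat -> R) :
  \det (\matrix_(i < 4, j < 4) f (nat_of_ord i) (nat_of_ord j)) =
  f 0 0 * (f 1 1 * (f 2 2 * f 3 3 - f 2 3 * f 3 2) - f 1 2 * (f 2 1 * f 3 3 - f 2 3 * f 3 1) + f 1 3 * (f 2 1 * f 3 2 - f 2 2 * f 3 1))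
 - f 0 1 * (f 1 0 * (f 2 2 * f 3 3 - f 2 3 * f 3 2) - f 1 2 * (f 2 0 * f 3 3 - f 2 3 * f 3 0) + f 1 3 * (f 2 0 * f 3 2 - f 2 2 * f 3 0))
 + f 0 2 * (f 1 0 * (f 2 1 * f 3 3 - f 2 3 * f 3 1) - f 1 1 * (f 2 0 * f 3 3 - f 2 3 * f 3 0) + f 1 3 * (f 2 0 * f 3 1 - f 2 1 * f 3 0))
 - f 0 3 * (f 1 0 * (f 2 1 * f 3 2 - f 2 2 * f 3 1) - f 1 1 * (f 2 0 * f 3 2 - f 2 2 * f 3 0) + f 1 2 * (f 2 0 * f 3 1 - f 2 1 * f 3 0)).
Proof.
rewrite (expand_det_row _ ord0) !big_ord_recr big_ord0 /=.
rewrite /cofactor !(expand_det_row _ ord0) !big_ord_recr !big_ord0 /=.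
rewrite /cofactor !(expand_det_row _ ord0) !big_ord_recr !big_ord0 /=.
rewrite /cofactor !det_mx11 !mxE /=.
ring.
Qed.

Lemma det4A (R : comPzRingType) (A : 'M[R]_4) :
  \det A = let f := fun p q : nat => A (inord p) (inord q) in
  f 0 0 * (f 1 1 * (f 2 2 * f 3 3 - f 2 3 * f 3 2) - f 1 2 * (f 2 1 * f 3 3 - f 2 3 * f 3 1) + f 1 3 * (f 2 1 * f 3 2 - f 2 2 * f 3 1))
 - f 0 1 * (f 1 0 * (f 2 2 * f 3 3 - f 2 3 * f 3 2) - f 1 2 * (f 2 0 * f 3 3 - f 2 3 * f 3 0) + f 1 3 * (f 2 0 * f 3 2 - f 2 2 * f 3 0))
 + f 0 2 * (f 1 0 * (f 2 1 * f 3 3 - f 2 3 * f 3 1) - f 1 1 * (f 2 0 * f 3 3 - f 2 3 * f 3 0) + f 1 3 * (f 2 0 * f 3 1 - f 2 1 * f 3 0))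
 - f 0 3 * (f 1 0 * (f 2 1 * f 3 2 - f 2 2 * f 3 1) - f 1 1 * (f 2 0 * f 3 2 - f 2 2 * f 3 0) + f 1 2 * (f 2 0 * f 3 1 - f 2 1 * f 3 0)).
Proof.
have E : A = \matrix_(i < 4, j < 4) (fun p q : nat => A (inord p) (inord q)) i j.
  by apply/matrixP=> i j; rewrite mxE !inord_val.
by rewrite {1}E (@det4 _ (fun p q : nat => A (inord p) (inord q))).
Qed.

Lemma key (C : idomainType) (X A S T : C) :
  T != 0 -> A != 0 -> S != 0 -> 2%:R != 0 :> C -> A * A + 4%:R * (S * S) != 0 ->
  (X * (X + A) - S * S) * (X * (X - A) - S * S) = 0 ->
  (T * (X + A) + X * T) * (X * (X - A) - S * S) + (X * (X + A) - S * S) * (T * (X - A) + X * T) != 0.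
Proof.
move=> T0 A0 S0 two0 D0 /eqP; rewrite mulf_eq0 => /orP[/eqP h|/eqP h].
- have -> : X * (X - A) - S * S = (X * (X + A) - S * S) - 2%:R * A * X by ring.
  rewrite h mul0r addr0 sub0r mulrN oppr_eq0.
  have X0 : X != 0.
    apply/eqP=> X0; move: h; rewrite X0 mul0r sub0r => /eqP; rewrite oppr_eq0 mulf_eq0 orbb.
    by apply/negP.
  have E0 : X + A + X != 0.
    apply/eqP=> E.
    have : 4%:R * (X * (X + A) - S * S) = (X + A + X) ^+ 2 - (A * A + 4%:R * (S * S)) by ring.
    rewrite h E mulr0 expr0n /= sub0r => /eqP; rewrite eq_sym oppr_eq0.
    by apply/negP.
  have -> : T * (X + A) + X * T = T * (X + A + X) by ring.
  by rewrite !mulf_neq0.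
- have -> : X * (X + A) - S * S = (X * (X - A) - S * S) + 2%:R * A * X by ring.
  rewrite h mulr0 !add0r.
  have X0 : X != 0.
    apply/eqP=> X0; move: h; rewrite X0 mul0r sub0r => /eqP; rewrite oppr_eq0 mulf_eq0 orbb.
    by apply/negP.
  have E0 : X - A + X != 0.
    apply/eqP=> E.
    have : 4%:R * (X * (X - A) - S * S) = (X - A + X) ^+ 2 - (A * A + 4%:R * (S * S)) by ring.
    rewrite h E mulr0 expr0n /= sub0r => /eqP; rewrite eq_sym oppr_eq0.
    by apply/negP.
  have -> : T * (X - A) + X * T = T * (X - A + X) by ring.
  by rewrite !mulf_neq0.
Qed.

Theorem mainTheorem5 (R : realType) (aN aB t0 : R) :
  aN != 0 -> aB != 0 -> aN != aB -> aB = - aN ->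
  0 < t0 -> t0 <= 1 ->
  forall th1 th2 : R,
    - pi <= th1 <= pi -> - pi <= th2 <= pi ->
    Fq th1 th2 = 0 ->
    forall eta : R[i],
      root (dispersion_poly aN aB t0 th1 th2) eta ->
      ~~ root (dispersion_poly aN aB t0 th1 th2)^`() eta.
Proof.
move=> aN0 aB0 _ aBE t0p _ th1 th2 _ _ F0 eta.
set x : {poly R[i]} := ((3 + t0 ^+ 2)%:C)%:P * 'X.
set a : {poly R[i]} := (aN%:C)%:P.
set s : {poly R[i]} := ((t0 ^+ 2)%:C)%:P.
have -> : dispersion_poly aN aB t0 th1 th2 = (x * (x + a) - s * s) * (x * (x - a) - s * s).
  have FJ : Num.conj (Fq th1 th2) = 0 by rewrite F0 conjC0.
  rewrite /dispersion_poly det4A /Mpoly /= !mxE !inordK //=.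
  rewrite FJ F0 !(mul0r, mulr0, subr0, sub0r, addr0, add0r) /= aBE.
  rewrite /x /a /s; rewrite rmorphN /=.
  ring.
have dx : x^`() = ((3 + t0 ^+ 2)%:C)%:P by rewrite /x derivM derivC derivX mul0r add0r mulr1.
have da : a^`() = 0 by rewrite derivC.
have ds : s^`() = 0 by rewrite derivC.
have ha : a.[eta] = aN%:C by rewrite hornerC.
have hs : s.[eta] = (t0 ^+ 2)%:C by rewrite hornerC.
clearbody x a s.
rewrite /root !(derivM, derivB, derivD) dx da ds !hornerE ha hs !subr0 => /eqP h.
have Cnz : forall r : R, r != 0 -> r%:C != 0.
  by move=> r; apply: contra => /eqP [->].
apply: key => //.
- apply: Cnz; rewrite gt_eqF //; nra.
- exact: Cnz.
- apply: Cnz; rewrite gt_eqF //; nra.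
- have -> : (4 : R[i]) = (4 : R)%:C by rewrite rmorph_nat.
  rewrite -!rmorphM -rmorphD; apply: Cnz; rewrite gt_eqF //; nra.
Qed.
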